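(* Let $U$, $x_i$, $x_{i+1/2}$, $h$, $\tilde h_R,\tilde h_L$ be as in the context, let $W_i:=\min_{j=1,\dots,k}(\tilde h_R(x_i;x_{j+1})+\tilde h_L(x_i;x_j))$ and $W(x)=\min_{j=1,\dots,k}\{W_j+h(x;x_j)\}$. Then for all $x\in\mathbb{S}^1$, $$W(x)=\min_{i=1,\dots,k}\min\{W_i+h(x;x_i),\ W(x_{i+1/2})+h(x;x_{i+1/2})\}.$$
   Context: $\mathbb{S}^1=\mathbb{R}/\mathbb{Z}$; $U:\mathbb{R}\to\mathbb{R}$ smooth, skew periodic ($U(x)=\tilde U(x)-\bar bx$, $\tilde U$ smooth 1-periodic), whose critical points in one period are exactly $k\ge1$ local minima $x_1,\dots,x_k$ interleaved with $k$ local maxima, $0=x_{1/2}<x_1<x_{3/2}<\dots<x_k<x_{k+1/2}=1$, $x_{i+\ell k}=x_i+\ell$. $L(s,x)=\frac14(s+U'(x))^2$. Peierls barrier from any $z\in\mathbb{S}^1$: $h(y;z)=\liminf_{T\to\infty}\inf\{\int_0^TL(\dot\gamma,\gamma)dt:\gamma:[0,T]\to\mathbb{S}^1$ absolutely continuous, $\gamma(0)=z,\gamma(T)=y\}$. Right barrier: for $y\in[x_i,x_{i+k}]$, $h_R(y;x_i)=\inf\{\int_0^TL(\dot\gamma,\gamma)dt:T\ge0,\gamma:[0,T]\to\mathbb{R}$ absolutely continuous, $\gamma(0)=x_i,\gamma(T)=y\}$; left barrier $h_L(y;x_i)$, $y\in[x_{i-k},x_i]$, same formula. For $i,j\in\{1,\dots,k\}$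 ($x_{k+1}=x_1+1$): $\tilde h_R(x_i;x_{j+1})=h_R(x_i;x_{j+1})$ if $j<i$, $=h_R(x_{i+k};x_{j+1})$ if $j\ge i$; $\tilde h_L(x_i;x_j)=h_L(x_i;x_j)$ if $j\ge i$, $=h_L(x_{i-k};x_j)$ if $j<i$. *)

(* Defs.v *)
From HB Require Import structures.
From mathcomp Require Import all_boot all_order all_algebra.
From mathcomp Require Import all_classical all_reals all_analysis.
Set Implicit Arguments. Unset Strict Implicit. Unset Printing Implicit Defensive.
Import Order.TTheory GRing.Theory Num.Theory.
Import numFieldNormedType.Exports.
Local Open Scope classical_set_scope.
Local Open Scope ring_scope.

Section Defs.
Variable R : realType.

Definition smooth (U : R -> R) : Prop :=
  forall (n : nat) (x : R), derivable (derive1n n U) x 1.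

Definition local_min (U : R -> R) (x : R) : Prop :=
  exists e : R, 0 < e /\ forall y, `|y - x| < e -> U x <= U y.
Definition local_max (U : R -> R) (x : R) : Prop :=
  exists e : R, 0 < e /\ forall y, `|y - x| < e -> U y <= U x.

Definition lagr (U : R -> R) (s x : R) : R := (s + derive1 U x) ^+ 2 / 4.

Definition abs_cont_on (a b : R) (g : R -> R) : Prop :=
  forall eps : R, 0 < eps -> exists2 delta : R, 0 < delta &
    forall (n : nat) (l r : nat -> R),
      (forall i, (i < n)%N -> a <= l i /\ l i <= r i /\ r i <= b) ->
      (forall i, (i.+1 < n)%N -> r i <= l i.+1) ->
      \sum_(i < n) (r i - l i) < delta ->
      \sum_(i < n) `|g (r i) - g (l i)| < eps.

Definition action (U : R -> R) (T : R) (g : R -> R) : \bar R :=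
  (\int[@lebesgue_measure R]_(t in `[0%R, T]) (lagr U (derive1 g t) (g t))%:E)%E.

(* minimal action in time T between z and y on S^1 = R/Z, curves being
   represented by their (absolutely continuous) lifts to R *)
Definition actT (U : R -> R) (T : R) (y z : R) : \bar R :=
  ereal_inf [set action U T g | g in
     [set g : R -> R | abs_cont_on 0 T g /\ g 0 = z /\
                       exists n : int, g T = y + n%:~R]].

Definition peierls (U : R -> R) (y z : R) : \bar R :=
  ereal_sup [set ereal_inf [set actT U T y z | T in [set T | S <= T]]
            | S in [set: R]].

(* barrier on the line (common formula for h_R and h_L):
   inf over T >= 0 and AC curves g : [0,T] -> R with g 0 = z, g T = y *)
Definition hline (U : R -> R) (y z : R) : \bar R :=
  ereal_inf [set a : \bar R | exists (T : R) (g : R -> R),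
     0 <= T /\ abs_cont_on 0 T g /\ g 0 = z /\ g T = y /\ a = action U T g].

Definition hR (U : R -> R) (y z : R) := hline U y z.
Definition hL (U : R -> R) (y z : R) := hline U y z.

(* tilde h_R(x_i; x_{j+1}) and tilde h_L(x_i; x_j), i j in 1..k,
   xs i = x_i (minima, indexed by int) *)
Definition thR (U : R -> R) (k : nat) (xs : int -> R) (i j : nat) : \bar R :=
  if (j < i)%N then hR U (xs i%:Z) (xs (j.+1)%:Z)
  else hR U (xs (i + k)%:Z) (xs (j.+1)%:Z).
Definition thL (U : R -> R) (k : nat) (xs : int -> R) (i j : nat) : \bar R :=
  if (i <= j)%N then hL U (xs i%:Z) (xs j%:Z)
  else hL U (xs (i%:Z - k%:Z)) (xs j%:Z).

Definition Wi (U : R -> R) (k : nat) (xs : int -> R) (i : nat) : \bar R :=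
  \big[Order.min/+oo%E]_(j < k) (thR U k xs i j.+1 + thL U k xs i j.+1)%E.

Definition Wfun (U : R -> R) (k : nat) (xs : int -> R) (x : R) : \bar R :=
  \big[Order.min/+oo%E]_(j < k) (Wi U k xs j.+1 + peierls U x (xs (j.+1)%:Z))%E.

End Defs.

(* Main.v *)
Require Import Defs.
From HB Require Import structures.
From mathcomp Require Import all_boot all_order all_algebra.
From mathcomp Require Import all_classical all_reals all_analysis.
From mathcomp Require Import measurable_realfun simple_functions lebesgue_integral_definition.
From mathcomp Require Import ring lra.
Import Order.TTheory GRing.Theory Num.Theory.
Import numFieldNormedType.Exports.
Local Open Scope ring_scope.
Local Open Scope classical_set_scope.
Import HBNNSimple.

Section shift_nnsfun.
Context {R : realType} (h : {nnsfun (measurableTypeR R) >-> R}) (a : R).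
Import HBNNSimple.

Lemma measurable_shiftR : measurable_fun [set: measurableTypeR R] (fun s : R => s + a).
Proof.
apply: continuous_measurable_fun => x.
by apply: cvgD; [exact: cvg_id | exact: cvg_cst].
Qed.

Definition hsh : measurableTypeR R -> R := fun s => h (s + a).

Lemma hsh_meas : measurable_fun setT hsh.
Proof.
apply: (measurableT_comp (f := h) (g := fun s : measurableTypeR R => (s + a : measurableTypeR R))).
  exact: measurable_funPT.
exact: measurable_shiftR.
Qed.

HB.instance Definition _ := isMeasurableFun.Build _ _ _ _ hsh hsh_meas.

Lemma hsh_fin : finite_set (range hsh).
Proof.
apply: (sub_finite_set _ (fimfunP h)).
by move=> y [x _ <-]; exists (x + a).
Qed.

HB.instance Definition _ := FiniteImage.Build _ _ hsh hsh_fin.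

Lemma hsh_ge0 : forall x, 0 <= hsh x.
Proof. by move=> x; rewrite /hsh. Qed.

HB.instance Definition _ := isNonNegFun.Build _ _ hsh hsh_ge0.

Definition hsh_nnsfun : {nnsfun (measurableTypeR R) >-> R} := hsh.

End shift_nnsfun.

Lemma lebesgue_shift {R : realType} (a : R) (B : set (measurableTypeR R)) :
  measurable B -> lebesgue_measure [set s | B (s + a)] = lebesgue_measure B.
Proof.
move=> mB.
have := @lebesgue_measure_unique R (pushforward lebesgue_measure (fun s : measurableTypeR R => (s + a : measurableTypeR R))).
move=> /(_ (measurable_shiftR a)) H; rewrite [RHS]H //.
move=> X [[x y] _ <-].
transitivity (lebesgue_measure (`](x - a), (y - a)]%classic : set (measurableTypeR R))).
  rewrite !lebesgue_measure_itv /= !lte_fin ltrD2r.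
  by case: ifP => // _; rewrite -!EFinD; congr EFin; ring.
apply: congr1.
by apply/seteqP; split => s /=; rewrite !in_itv /= ?lerBrDr ?ltrBlDr ?lerBlDr ?ltrBrDr.
Qed.

Lemma sintegral_shift {R : realType} (h : {nnsfun (measurableTypeR R) >-> R}) (a : R) :
  sintegral lebesgue_measure (hsh_nnsfun h a) = sintegral lebesgue_measure h.
Proof.
rewrite !sintegralET; apply: eq_fsbigr => x _; congr (_ * _)%E.
rewrite -[RHS](lebesgue_shift a); last exact: measurable_funPTI.
by [].
Qed.

Lemma patch_itv' {R : realType} (f : measurableTypeR R -> \bar R) (i : interval R) (x : R) :
  (f \_ ([set` i] : set (measurableTypeR R))) x = if x \in i then f x else 0%E.
Proof. by rewrite patchE mem_setE. Qed.

Section concat_int.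
Context {R : realType}.
Import HBNNSimple.
Local Open Scope ereal_scope.
Notation mu := (@lebesgue_measure R).

Lemma int_concat (f f1 f2 : R -> R) (T1 T2 : R) :
  (0 <= T1)%R -> (0 <= T2)%R ->
  (forall t, 0 <= f t)%R -> (forall t, 0 <= f1 t)%R -> (forall t, 0 <= f2 t)%R ->
  (forall t, 0 <= t -> t < T1 -> f t = f1 t)%R ->
  (forall t, T1 < t -> t <= T1 + T2 -> f t = f2 (t - T1))%R ->
  \int[mu]_(t in `[0%R, (T1 + T2)%R]) (f t)%:E <=
  \int[mu]_(t in `[0%R, T1]) (f1 t)%:E + \int[mu]_(t in `[0%R, T2]) (f2 t)%:E.
Proof.
move=> T10 T20 f0 f10 f20 e1 e2.
rewrite ge0_integralE; last by move=> x _; rewrite lee_fin.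
apply: ge_ereal_sup => _ [h /= hle <-].
have hout x : (x \notin `[0, T1 + T2])%R -> h x = 0%R.
  move=> xn; apply/eqP; rewrite eq_le fun_ge0 andbT.
  by have := hle x; rewrite patch_itv' (negbTE xn) lee_fin.
have hin x : (x \in `[0, T1 + T2])%R -> (h x <= f x)%R.
  by move=> xi; have := hle x; rewrite patch_itv' xi lee_fin.
have mA1 : measurable (`[0%R, T1[ : set (measurableTypeR R)) by exact: measurable_itv.
have mA2 : measurable (`]T1, (T1 + T2)%R] : set (measurableTypeR R)) by exact: measurable_itv.
have mP : measurable ([set T1] : set (measurableTypeR R)) by exact: measurable_set1.
pose h1 := proj_nnsfun h mA1. pose h2 := proj_nnsfun h mA2. pose h3 := proj_nnsfun h mP.
have hE : sintegral mu h = sintegral mu h1 + sintegral mu h2 + sintegral mu h3.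
  rewrite -(sintegralD mu h1 h2) -(sintegralD mu (add_nnsfun h1 h2) h3).
  apply: eq_sintegral => x /=; rewrite !mindicE !mem_setE !in_itv /= in_set1.
  have [xi|xo] := boolP (x \in `[0, T1 + T2])%R; last first.
    by rewrite hout // !mul0r !addr0.
  move: xi; rewrite in_itv /= => /andP[x0 xT].
  rewrite x0 xT /=.
  case: (ltgtP x T1) => [xl|xg|->] /=; rewrite ?mulr1 ?mulr0 ?addr0 ?add0r //.
have h30 : sintegral mu h3 = 0.
  rewrite sintegralET; apply: fsbig1 => x _.
  have [->|x0] := eqVneq x 0%R; first by rewrite mul0e.
  rewrite (@subset_measure0 _ _ _ mu _ [set T1]) ?mule0 //.
  - move=> t /= ; rewrite mindicE.
    case: (t \in [set T1]) / boolP => [/set_mem //|_]; rewrite mulr0 => /esym ?.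
    by move/eqP: x0.
  - exact: lebesgue_measure_set1.
rewrite hE h30 adde0; apply: leeD.
- rewrite ge0_integralE; last by move=> x _; rewrite lee_fin.
  apply: ereal_sup_ubound; exists h1 => // x /=.
  rewrite patch_itv' mindicE mem_setE !in_itv /=.
  case: (boolP ((0 <= x)%R && (x < T1)%R)) => [/andP[x0 xl]|_]; last first.
    by rewrite mulr0; case: ifP; rewrite lee_fin.
  rewrite x0 (ltW xl) mulr1 lee_fin -e1 //; apply: hin.
  by rewrite in_itv /= x0 /=; apply: le_trans (ltW xl) _; rewrite lerDl.
- rewrite -(sintegral_shift h2 T1) ge0_integralE; last by move=> x _; rewrite lee_fin.
  apply: ereal_sup_ubound; exists (hsh_nnsfun h2 T1) => // x /=.
  rewrite /hsh /= patch_itv' mindicE mem_setE !in_itv /=.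
  case: (boolP ((T1 < x + T1)%R && (x + T1 <= T1 + T2)%R)) => [/andP[xl xr]|_]; last first.
    by rewrite /= mulr0; case: ifP; rewrite lee_fin.
  have x0 : (0 < x)%R by rewrite -(ltrD2r T1) add0r.
  have xT : (x <= T2)%R by rewrite -(lerD2l T1) addrC.
  rewrite (ltW x0) xT mulr1 lee_fin.
  have -> : f2 x = f (x + T1)%R by rewrite e2 // addrK.
  apply: hin; rewrite in_itv /= xr andbT.
  by apply: le_trans (ltW xl); exact: T10.
Qed.
End concat_int.

Section deriv.
Context {R : realType}.

Lemma derive1_ext (f g : R -> R) (a b : R) :
  (forall h, f (h + a) - f a = g (h + b) - g b) -> derive1 f a = derive1 g b.
Proof.
move=> H; rewrite /derive1.
have -> : (fun h => h^-1 *: (f (h + a) - f a)) = (fun h => h^-1 *: (g (h + b) - g b)).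
  by apply/funext => h; rewrite H.
by [].
Qed.

Lemma derive1_near (f g : R -> R) (a : R) :
  (\forall x \near a, f x = g x) -> derive1 f a = derive1 g a.
Proof. by move=> H; rewrite !derive1E; exact: (@near_eq_derive _ _ _ f g a 1 H). Qed.

Lemma derive1_per (U : R -> R) (bbar : R) :
  (forall x, U (x + 1) = U x - bbar) ->
  forall (t : R) (n : int), derive1 U (t + n%:~R) = derive1 U t.
Proof.
move=> HU.
have h1 t : derive1 U (t + 1) = derive1 U t.
  apply: derive1_ext => h; rewrite addrA !HU; ring.
have hn t (m : nat) : derive1 U (t + m%:R) = derive1 U t.
  elim: m t => [|m IH] t; first by rewrite addr0.
  by rewrite -addn1 natrD addrA h1 IH.
move=> t [m|m].
  by rewrite -pmulrn hn.
rewrite NegzE mulrNz -pmulrn.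
by rewrite -[in RHS](subrK (m.+1%:R) t) hn.
Qed.

End deriv.

Section concat.
Context {R : realType}.

Definition catf (g1 g2 : R -> R) (T1 c : R) : R -> R :=
  fun t => if t <= T1 then g1 t else g2 (t - T1) + c.

Lemma catf_l g1 g2 T1 c t : t <= T1 -> catf g1 g2 T1 c t = g1 t.
Proof. by rewrite /catf => ->. Qed.

Lemma catf_r {g1 g2 T1 c t} : g1 T1 = g2 0 + c -> T1 <= t ->
  catf g1 g2 T1 c t = g2 (t - T1) + c.
Proof.
move=> e Tt; rewrite /catf; case: ifPn => // tT.
have -> : t = T1 by apply/eqP; rewrite eq_le tT Tt.
by rewrite subrr.
Qed.

Definition cut1 (T1 t : R) := if t <= T1 then t else T1.
Definition cut2 (T1 t : R) := if t <= T1 then 0 else t - T1.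

Lemma abs_cont_cat g1 g2 T1 T2 c : 0 <= T1 -> 0 <= T2 -> g1 T1 = g2 0 + c ->
  abs_cont_on 0 T1 g1 -> abs_cont_on 0 T2 g2 ->
  abs_cont_on 0 (T1 + T2) (catf g1 g2 T1 c).
Proof.
move=> T10 T20 e ac1 ac2 eps eps0.
have e2 : 0 < eps / 2 by rewrite divr_gt0.
have [d1 d10 H1] := ac1 _ e2.
have [d2 d20 H2] := ac2 _ e2.
exists (Order.min d1 d2); first by rewrite lt_min d10 d20.
move=> n l r hlr hnov hsum.
pose l1 i := cut1 T1 (l i). pose r1 i := cut1 T1 (r i).
pose l2 i := cut2 T1 (l i). pose r2 i := cut2 T1 (r i).
have key i : (i < n)%N -> `|catf g1 g2 T1 c (r i) - catf g1 g2 T1 c (l i)| <=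
    `|g1 (r1 i) - g1 (l1 i)| + `|g2 (r2 i) - g2 (l2 i)|.
  move=> /hlr [l0 [lr rT]].
  rewrite /r1 /l1 /r2 /l2 /cut1 /cut2.
  case: (leP (r i) T1) => rT1.
    have lT1 : l i <= T1 by apply: le_trans rT1.
    by rewrite lT1 !catf_l // subrr normr0 addr0.
  rewrite (catf_r e (ltW rT1)).
  case: (leP (l i) T1) => lT1.
    rewrite catf_l //.
    have -> : g2 (r i - T1) + c - g1 (l i) = (g1 T1 - g1 (l i)) + (g2 (r i - T1) - g2 0) by rewrite e; ring.
    exact: ler_normD.
  rewrite (catf_r e (ltW lT1)) subrr normr0 add0r.
  by rewrite opprD addrACA subrr addr0.
have len1 i : (i < n)%N -> r1 i - l1 i <= r i - l i.
  move=> /hlr [l0 [lr rT]]; rewrite /r1 /l1 /cut1.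
  by case: (leP (r i) T1); case: (leP (l i) T1) => //= *; lra.
have len2 i : (i < n)%N -> r2 i - l2 i <= r i - l i.
  move=> /hlr [l0 [lr rT]]; rewrite /r2 /l2 /cut2.
  by case: (leP (r i) T1); case: (leP (l i) T1) => //= *; lra.
apply: (@le_lt_trans _ _ (\sum_(i < n) (`|g1 (r1 i) - g1 (l1 i)| + `|g2 (r2 i) - g2 (l2 i)|))).
  by apply: ler_sum => i _; exact: key i (ltn_ord i).
rewrite big_split /= [X in _ < X]splitr; apply: ltrD.
- apply: H1.
  + move=> i /hlr [l0 [lr rT]]; rewrite /r1 /l1 /cut1.
    by case: (leP (r i) T1); case: (leP (l i) T1) => //= *; lra.
  + move=> i /[dup] /hnov rl /ltnW /hlr [l0 [lr rT]]; rewrite /r1 /l1 /cut1.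
    by case: (leP (r i) T1); case: (leP (l i.+1) T1) => //= *; lra.
  + apply: (le_lt_trans _ (lt_le_trans hsum _)); last by rewrite ge_min lexx.
    by apply: ler_sum => i _; exact: len1 i (ltn_ord i).
- apply: H2.
  + move=> i /hlr [l0 [lr rT]]; rewrite /r2 /l2 /cut2.
    by case: (leP (r i) T1); case: (leP (l i) T1) => //= *; lra.
  + move=> i /[dup] /hnov rl /ltnW /hlr [l0 [lr rT]]; rewrite /r2 /l2 /cut2.
    by case: (leP (r i) T1); case: (leP (l i.+1) T1) => //= *; lra.
  + apply: (le_lt_trans _ (lt_le_trans hsum _)); last by rewrite ge_min lexx orbT.
    by apply: ler_sum => i _; exact: len2 i (ltn_ord i).
Qed.

End concat.

Section infs.
Context {R : realType}.
Local Open Scope ereal_scope.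

Lemma inf_add (B C : set (\bar R)) (a : \bar R) :
  (forall b, B b -> 0 <= b) -> (forall c, C c -> 0 <= c) ->
  (forall b c, B b -> C c -> a <= b + c) -> a <= ereal_inf B + ereal_inf C.
Proof.
move=> B0 C0 H.
have iB0 : 0 <= ereal_inf B by apply: le_ereal_inf_tmp.
have iC0 : 0 <= ereal_inf C by apply: le_ereal_inf_tmp.
case EB: (ereal_inf B) iB0 => [rb| |] // rb0; last first.
  by rewrite addye ?leey // gt_eqF // (lt_le_trans _ iC0) // ltNy0.
case EC: (ereal_inf C) iC0 => [rc| |] // rc0; last first.
  by rewrite addey ?leey.
apply/lee_addgt0Pr => e e0.
have e2 : (0 < e / 2)%R by rewrite divr_gt0.
have fB : ereal_inf B \is a fin_num by rewrite EB.
have fC : ereal_inf C \is a fin_num by rewrite EC.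
have [b Bb hb] := lb_ereal_inf_adherent e2 fB.
have [c Cc hc] := lb_ereal_inf_adherent e2 fC.
rewrite EB in hb; rewrite EC in hc.
apply: le_trans (H _ _ Bb Cc) _.
apply: le_trans (leeD (ltW hb) (ltW hc)) _.
by rewrite -!EFinD lee_fin; lra.
Qed.

Lemma action_ge0 (U : R -> R) T g : 0 <= action U T g.
Proof.
apply: integral_ge0 => t _; rewrite lee_fin /lagr.
by apply: divr_ge0 => //; exact: sqr_ge0.
Qed.

Lemma actT_ge0 (U : R -> R) T y z : 0 <= actT U T y z.
Proof. by apply: le_ereal_inf_tmp => _ [g _ <-]; exact: action_ge0. Qed.

Lemma hline_ge0 (U : R -> R) y z : 0 <= hline U y z.
Proof. by apply: le_ereal_inf_tmp => _ [T [g [_ [_ [_ [_ ->]]]]]]; exact: action_ge0. Qed.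

Lemma peierls_ge0 (U : R -> R) y z : 0 <= peierls U y z.
Proof.
apply: le_ereal_sup_tmp; exists (ereal_inf [set actT U T y z | T in [set T : R | (0 <= T)%R]]).
  by exists 0%R.
by apply: le_ereal_inf_tmp => _ [T _ <-]; exact: actT_ge0.
Qed.

End infs.

Section tri.
Context {R : realType}.
Local Open Scope ereal_scope.

Lemma lagr_ge0 (U : R -> R) s x : (0 <= lagr U s x)%R.
Proof. by rewrite /lagr; apply: divr_ge0 => //; exact: sqr_ge0. Qed.

Lemma actT_tri (U : R -> R) bbar (HU : forall x : R, U (x + 1)%R = (U x - bbar)%R)
  (T1 T2 x y z : R) : (0 <= T1)%R -> (0 <= T2)%R ->
  actT U (T1 + T2) x z <= actT U T1 y z + actT U T2 x y.
Proof.
move=> T10 T20; apply: inf_add.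
- by move=> _ [g _ <-]; exact: action_ge0.
- by move=> _ [g _ <-]; exact: action_ge0.
move=> _ _ [g1 [ac1 [g10 [n1 g1T]]] <-] [g2 [ac2 [g20 [n2 g2T]]] <-].
set c := (n1%:~R : R).
have e : g1 T1 = (g2 0 + c)%R by rewrite g1T g20.
pose G := catf g1 g2 T1 c.
apply: (@le_trans _ _ (action U (T1 + T2) G)).
  apply: ereal_inf_lbound; exists G => //; split; first exact: abs_cont_cat.
  split; first by rewrite /G catf_l.
  exists (n2 + n1)%R; rewrite /G (catf_r e); last by rewrite lerDl.
  have -> : (T1 + T2 - T1 = T2)%R by ring.
  by rewrite g2T intrD addrA.
rewrite /action.
apply: (@int_concat R (fun t => lagr U (derive1 G t) (G t))
   (fun t => lagr U (derive1 g1 t) (g1 t)) (fun t => lagr U (derive1 g2 t) (g2 t))) => //.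
- by move=> t; exact: lagr_ge0.
- by move=> t; exact: lagr_ge0.
- by move=> t; exact: lagr_ge0.
- move=> t t0 tT1 /=.
  rewrite /G (catf_l _ _ _ _ _ (ltW tT1)) (@derive1_near _ _ g1) //.
  by apply: filterS (lt_nbhsl tT1) => s sT; exact: catf_l (ltW sT).
- move=> t tT1 tT /=.
  rewrite /G (catf_r e (ltW tT1)).
  have -> : derive1 (catf g1 g2 T1 c) t = derive1 g2 (t - T1).
    rewrite (@derive1_near _ _ (fun s => g2 (s - T1) + c)%R); last first.
      by apply: filterS (lt_nbhsr tT1) => s sT; exact: catf_r e (ltW sT).
    apply: derive1_ext => h; rewrite [(h + (t - T1))%R]addrA; ring.
  by rewrite /lagr /c (derive1_per _ _ HU).
Qed.

Lemma peierls_tri (U : R -> R) bbar (HU : forall x : R, U (x + 1)%R = (U x - bbar)%R) x y z :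
  peierls U x z <= peierls U y z + peierls U x y.
Proof.
apply: ge_ereal_sup => _ [S _ <-].
set S' := Order.max S 0%R.
have S'0 : (0 <= S')%R by rewrite le_max lexx orbT.
have SS' : (S <= S')%R by rewrite le_max lexx.
apply: (@le_trans _ _ (ereal_inf [set actT U T y z | T in [set T : R | (S' <= T)%R]] +
    ereal_inf [set actT U T x y | T in [set T : R | (0 <= T)%R]])).
- apply: inf_add.
  + by move=> _ [T _ <-]; exact: actT_ge0.
  + by move=> _ [T _ <-]; exact: actT_ge0.
  move=> _ _ [T1 /= hT1 <-] [T2 /= hT2 <-].
  have T10 : (0 <= T1)%R by apply: le_trans hT1.
  apply: le_trans (actT_tri U bbar HU T1 T2 x y z T10 hT2).
  apply: ereal_inf_lbound; exists (T1 + T2)%R => //=.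
  by apply: le_trans (le_trans SS' hT1) _; rewrite lerDl.
- by apply: leeD; apply: ereal_sup_ubound; [exists S' | exists 0%R].
Qed.

End tri.

Section mainsec.
Context {R : realType}.
Local Open Scope ereal_scope.

Lemma bigmin_le (k : nat) (F : 'I_k -> \bar R) i :
  \big[Order.min/+oo]_(j < k) F j <= F i.
Proof. by rewrite (bigD1 i) //= ge_min lexx. Qed.

Lemma le_bigmin (k : nat) (F : 'I_k -> \bar R) a :
  (forall i, a <= F i) -> a <= \big[Order.min/+oo]_(j < k) F j.
Proof.
move=> H; apply: (big_ind (fun v => a <= v)) => //; first exact: leey.
by move=> u v au av; rewrite le_min au av.
Qed.

Lemma le_bigminD (k : nat) (F : 'I_k -> \bar R) a p : 0 <= p ->
  (forall i, a <= F i + p) -> a <= \big[Order.min/+oo]_(j < k) F j + p.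
Proof.
move=> p0 H; apply: (big_ind (fun v => a <= v + p)) => //.
  by rewrite addye ?leey // gt_eqF // (lt_le_trans _ p0) // ltNy0.
by move=> u v au av; case: (leP u v).
Qed.

End mainsec.

Local Close Scope classical_set_scope.
Local Close Scope ereal_scope.
Local Open Scope ring_scope.
Theorem lemma4p4 (R : realType) (U : R -> R) (k : nat) (xs xh : int -> R) :
  (0 < k)%N ->
  smooth U ->
  (exists bbar : R, forall x : R, U (x + 1) = U x - bbar) ->
  (forall i : int, xs (i + k%:Z) = xs i + 1) ->
  (forall i : int, xh (i + k%:Z) = xh i + 1) ->
  xh 0 = 0 ->
  (forall i : int, xh (i - 1) < xs i /\ xs i < xh i) ->
  (forall x : R, derive1 U x = 0 <-> exists i : int, x = xs i \/ x = xh i) ->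
  (forall i : int, local_min U (xs i)) ->
  (forall i : int, local_max U (xh i)) ->
  forall x : R,
    Wfun U k xs x =
    \big[Order.min/+oo%E]_(i < k)
      Order.min (Wi U k xs i.+1 + peierls U x (xs (i.+1)%:Z))%E
                (Wfun U k xs (xh (i.+1)%:Z) + peierls U x (xh (i.+1)%:Z))%E.
Proof.
move=> _ _ [bbar HU] _ _ _ _ _ _ _ x.
apply/eqP; rewrite eq_le; apply/andP; split.
- apply: le_bigmin => i; rewrite le_min; apply/andP; split.
    rewrite /Wfun; exact: bigmin_le.
  rewrite /Wfun; apply: le_bigminD; first exact: peierls_ge0.
  move=> j.
  have := @bigmin_le R k (fun j0 : 'I_k => (Wi U k xs j0.+1 + peierls U x (xs j0.+1))%E) j.
  move/le_trans; apply.
  rewrite -addeA; apply: leeD => //.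
  exact: (peierls_tri U bbar HU).
- apply: (big_ind2 (fun a b : \bar R => (a <= b)%O)) => //.
    by move=> x1 x2 y1 y2 h1 h2; exact: le_min2.
  by move=> i _; rewrite ge_min lexx.
Qed.
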